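(* Let $G$ be a finite simple graph on $[n]$, $w:E(G)\to\mathbb Z_{>0}$ a weight function, $\Bbbk$ a field, $S=\Bbbk[x_1,\ldots,x_n]$ and $I(G_w)=\big((x_ix_j)^{w(i,j)}\mid\{i,j\}\in E(G)\big)$. Let $x^{\mathbf a}$ be a monomial not in $I(G_w)$ and let $U=\{i\mid\text{there exists } j \text{ with }\{i,j\}\in E(G)\text{ and } a_i<w(i,j)\le a_j\}$. Then $$\sqrt{I(G_w):x^{\mathbf a}}=I(G\setminus U)+(x_i\mid i\in U),$$ where $I(G\setminus U)$ is the edge ideal of the induced subgraph of $G$ on $[n]\setminus U$.
   Context: The edge ideal of a graph $H$ is $(x_ix_j\mid\{i,j\}\in E(H))$. $w(i,j)$ denotes the weight of edge $\{i,j\}$. *)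

(* Defs.v *)
From HB Require Import structures.
From mathcomp Require Import all_boot all_order all_algebra.
From mathcomp Require Import mpoly.
Set Implicit Arguments. Unset Strict Implicit. Unset Printing Implicit Defensive.
Import GRing.Theory.
Local Open Scope ring_scope.

Definition gen_ideal (R : comNzRingType) (s : seq R) : R -> Prop :=
  fun p => exists c : 'I_(size s) -> R, p = \sum_(i < size s) c i * s`_i.

Definition colon_ideal (R : comNzRingType) (I : R -> Prop) (f : R) : R -> Prop :=
  fun p => I (p * f).

Definition rad_ideal (R : comNzRingType) (I : R -> Prop) : R -> Prop :=
  fun p => exists m : nat, I (p ^+ m).

(* A finite simple graph on [n] is a symmetric irreflexive relation E on 'I_n.
   Edges {i,j} are listed once, as pairs (i,j) with i < j. *)
Definition edges (n : nat) (E : rel 'I_n) : seq ('I_n * 'I_n) :=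
  enum [pred ij : 'I_n * 'I_n | (ij.1 < ij.2)%N && E ij.1 ij.2].

Definition wedge_gens (K : fieldType) (n : nat) (E : rel 'I_n)
  (w : 'I_n -> 'I_n -> nat) : seq {mpoly K[n]} :=
  [seq ('X_ij.1 * 'X_ij.2) ^+ (w ij.1 ij.2) | ij <- edges E].

Definition induced_edge_gens (K : fieldType) (n : nat) (E : rel 'I_n)
  (U : {set 'I_n}) : seq {mpoly K[n]} :=
  [seq 'X_ij.1 * 'X_ij.2 | ij <- edges E & (ij.1 \notin U) && (ij.2 \notin U)].

Definition var_gens (K : fieldType) (n : nat) (U : {set 'I_n}) : seq {mpoly K[n]} :=
  [seq 'X_i | i <- enum U].

(* Main.v *)
Require Import Defs.
From HB Require Import structures.
From mathcomp Require Import all_boot all_order all_algebra.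
From mathcomp Require Import mpoly.
From mathcomp Require Import ring zify.
Import GRing.Theory.
Local Open Scope ring_scope.

Section Ideals.
Context {R : comNzRingType} {s : seq R}.

Lemma gi0 : gen_ideal s 0.
Proof. by exists (fun _ => 0); rewrite big1 // => i _; rewrite mul0r. Qed.

Lemma giD p q : gen_ideal s p -> gen_ideal s q -> gen_ideal s (p + q).
Proof.
move=> [c ->] [d ->]; exists (fun i => c i + d i); rewrite -big_split.
by apply: eq_bigr => i _; rewrite mulrDl.
Qed.

Lemma giM r p : gen_ideal s p -> gen_ideal s (r * p).
Proof.
move=> [c ->]; exists (fun i => r * c i); rewrite mulr_sumr.
by apply: eq_bigr => i _; rewrite mulrA.
Qed.

Lemma gi_mem x : x \in s -> gen_ideal s x.
Proof.
move=> xs; pose k := Ordinal (etrans (index_mem x s) xs).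
exists (fun i => (i == k)%:R); rewrite (bigD1 k) //= eqxx mul1r nth_index //.
by rewrite big1 ?addr0 // => i /negbTE ->; rewrite mul0r.
Qed.

Lemma gi_ind (Pr : R -> Prop) : Pr 0 -> (forall x y, Pr x -> Pr y -> Pr (x + y)) ->
  (forall r x, Pr x -> Pr (r * x)) -> (forall x, x \in s -> Pr x) ->
  forall p, gen_ideal s p -> Pr p.
Proof.
move=> P0 PD PM Ps p [c ->]; apply: big_ind => // i _.
by apply: PM; apply: Ps; apply: mem_nth.
Qed.

Context {f : R}.
Let Q := rad_ideal (colon_ideal (gen_ideal s) f).

Lemma Q0 : Q 0.
Proof. by exists 1%N; rewrite /colon_ideal expr1 mul0r; apply: gi0. Qed.

Lemma QM r x : Q x -> Q (r * x).
Proof.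
move=> [m Hm]; exists m; rewrite /colon_ideal exprMn -mulrA; exact: giM.
Qed.

Lemma QD x y : Q x -> Q y -> Q (x + y).
Proof.
move=> [m1 H1] [m2 H2]; exists (m1 + m2)%N; rewrite /colon_ideal exprDn mulr_suml.
apply: big_ind => //; [exact: gi0 | exact: giD|] => i _.
rewrite -mulr_natr.
case: (leqP m2 i) => h.
  rewrite -(subnK h) exprD.
  have -> : x ^+ (m1 + m2 - (i - m2 + m2)) * (y ^+ (i - m2) * y ^+ m2) * ('C(m1 + m2, i - m2 + m2))%:R * f
    = (x ^+ (m1 + m2 - (i - m2 + m2)) * y ^+ (i - m2) * ('C(m1 + m2, i - m2 + m2))%:R) * (y ^+ m2 * f).
    by ring.
  exact: giM.
have h' : (m1 <= m1 + m2 - i)%N by lia.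
rewrite -(subnK h') exprD.
have -> : x ^+ (m1 + m2 - i - m1) * x ^+ m1 * y ^+ i * ('C(m1 + m2, i))%:R * f
    = (x ^+ (m1 + m2 - i - m1) * y ^+ i * ('C(m1 + m2, i))%:R) * (x ^+ m1 * f).
  by ring.
exact: giM.
Qed.

End Ideals.

Section Mono.
Context {K : fieldType} {n : nat}.
Implicit Types (p q : {mpoly K[n]}) (ms : seq 'X_{1..n}).

Lemma MI1 ms p : gen_ideal [seq 'X_[m] | m <- ms] p ->
  forall b, b \in msupp p -> has (fun g => (g <= b)%MM) ms.
Proof.
move=> [c ->] b /msupp_sum_le /flattenP [l /mapP [i _ ->]].
have hi : (i < size ms)%N by have := ltn_ord i; rewrite [X in (_ < X)%N -> _]size_map.
rewrite (nth_map 0%MM) // (perm_mem (msuppMX _ _)) => /mapP [m' _ ->].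
by apply/hasP; exists (nth 0%MM ms i); [apply: mem_nth | apply: lem_addr].
Qed.

Lemma MI2 ms p : (forall b, b \in msupp p -> has (fun g => (g <= b)%MM) ms) ->
  gen_ideal [seq 'X_[m] | m <- ms] p.
Proof.
move=> H; rewrite [p]mpolyE big_seq; apply: big_ind; [exact: gi0|exact: giD|].
move=> m mp; have /hasP [g gms gle] := H m mp.
rewrite -(submK gle) mpolyXD -mul_mpolyC mulrA; apply: giM.
by apply: gi_mem; apply: map_f.
Qed.

Lemma msupp_mulP (Pr : pred 'X_{1..n}) p q :
  (forall m1 m2, Pr m1 -> Pr m2 -> Pr (m1 + m2)%MM) ->
  all Pr (msupp p) -> all Pr (msupp q) -> all Pr (msupp (p * q)).
Proof.
move=> HD /allP hp /allP hq; apply/allP => m /msuppM_le /allpairsP [[m1 m2] [/= h1 h2 ->]].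
by apply: HD; [apply: hp | apply: hq].
Qed.

Lemma msupp_mul_up (Pr : pred 'X_{1..n}) p q :
  (forall m1 m2, Pr m1 -> Pr (m1 + m2)%MM) ->
  all Pr (msupp p) -> all Pr (msupp (p * q)).
Proof.
move=> HD /allP hp; apply/allP => m /msuppM_le /allpairsP [[m1 m2] [/= h1 h2 ->]].
by apply: HD; apply: hp.
Qed.

Lemma msupp_expP (Pr : pred 'X_{1..n}) p k :
  Pr 0%MM -> (forall m1 m2, Pr m1 -> Pr m2 -> Pr (m1 + m2)%MM) ->
  all Pr (msupp p) -> all Pr (msupp (p ^+ k)).
Proof.
move=> P0 HD hp; elim: k => [|k IH].
  by rewrite expr0 -mpolyC1 msupp1 /= P0.
by rewrite exprS; apply: msupp_mulP.
Qed.

Lemma mcoeff_sumX (r : seq 'X_{1..n}) (F : 'X_{1..n} -> K) c : uniq r ->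
  (\sum_(m <- r) F m *: 'X_[m] : {mpoly K[n]})@_c = if c \in r then F c else 0.
Proof.
elim: r => [|m r IH] /=; first by rewrite big_nil mcoeff0.
case/andP=> mr ur; rewrite big_cons mcoeffD mcoeffZ mcoeffX IH // in_cons.
case: (eqVneq m c) => [<-|ne] /=.
  by rewrite ?eqxx (negbTE mr) mulr1 addr0.
by rewrite ?(eq_sym c) ?(negbTE ne) /= mulr0 add0r.
Qed.

End Mono.

Theorem lemma2p13 (K : fieldType) (n : nat) (E : rel 'I_n)
  (E_sym : forall i j, E i j = E j i) (E_irr : forall i, ~~ E i i)
  (w : 'I_n -> 'I_n -> nat)
  (w_sym : forall i j, E i j -> w i j = w j i)
  (w_pos : forall i j, E i j -> (0 < w i j)%N)
  (a : 'X_{1..n})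
  (ha : ~ gen_ideal (wedge_gens K E w) 'X_[a]) :
  let U := [set i : 'I_n | [exists j : 'I_n, E i j && ((a i < w i j)%N && (w i j <= a j)%N)]] in
  forall p : {mpoly K[n]},
    rad_ideal (colon_ideal (gen_ideal (wedge_gens K E w)) 'X_[a]) p <->
    gen_ideal (induced_edge_gens K E U ++ var_gens K U) p.
Proof.
move=> U p.
have edgesP i j : ((i, j) \in edges E) = (i < j)%N && E i j by rewrite /edges mem_enum inE.
pose wm := [seq ((U_(ij.1) + U_(ij.2)) *+ w ij.1 ij.2)%MM | ij <- edges E].
have wE : wedge_gens K E w = [seq 'X_[m] | m <- wm].
  by rewrite /wedge_gens -map_comp; apply: eq_map => ij /=; rewrite -mpolyXn mpolyXD.
pose jm := [seq (U_(ij.1) + U_(ij.2))%MM | ij <- edges E & (ij.1 \notin U) && (ij.2 \notin U)]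
        ++ [seq U_(i)%MM | i <- enum U].
have jE : induced_edge_gens K E U ++ var_gens K U = [seq 'X_[m] | m <- jm].
  rewrite map_cat -!map_comp /induced_edge_gens /var_gens; congr (_ ++ _).
  by apply: eq_map => ij /=; rewrite mpolyXD.
have wedge_mem i j : E i j -> gen_ideal (wedge_gens K E w) (('X_i * 'X_j) ^+ w i j).
  move=> Eij; case: (ltngtP i j) => [lt|gt|eq].
  - by apply: gi_mem; apply/mapP; exists (i, j); rewrite ?edgesP ?lt ?Eij.
  - rewrite mulrC w_sym //; apply: gi_mem; apply/mapP; exists (j, i) => //.
    by rewrite edgesP gt -E_sym Eij.
  - by move: Eij; rewrite (val_inj eq) (negbTE (E_irr j)).
split.
- case=> m; rewrite /colon_ideal wE => Hm.
  rewrite jE; apply: MI2 => b bp; apply/negPn/negP => nh.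
  pose good := fun c : 'X_{1..n} => [forall i, (c i != 0%N) ==> (b i != 0%N)].
  pose p1 : {mpoly K[n]} := \sum_(c <- msupp p) (if good c then p@_c else 0) *: 'X_[c].
  have p1E c : p1@_c = if good c then p@_c else 0.
    rewrite mcoeff_sumX //; case: ifP => // /negbT /memN_msupp_eq0 ->; by case: ifP.
  pose p2 := p - p1.
  have p2E c : p2@_c = if good c then 0 else p@_c.
    by rewrite mcoeffB p1E; case: ifP; rewrite ?subrr ?subr0.
  have goodD m1 m2 : good m1 -> good m2 -> good (m1 + m2)%MM.
    move=> /forallP h1 /forallP h2; apply/forallP => i; rewrite mnmDE addn_eq0 negb_and.
    by apply/implyP => /orP [/(implyP (h1 i))|/(implyP (h2 i))].
  have badD m1 m2 : ~~ good m1 -> ~~ good (m1 + m2)%MM.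
    apply: contra => /forallP h; apply/forallP => i; apply/implyP => hi.
    by apply: (implyP (h i)); rewrite mnmDE addn_eq0 negb_and hi.
  have good0 : good 0%MM by apply/forallP => i; rewrite mnm0E.
  have g1 : all good (msupp p1).
    by apply/allP => c; rewrite mcoeff_msupp p1E; case: ifP => //; rewrite eqxx.
  have g2 : all (predC good) (msupp p2).
    by apply/allP => c; rewrite mcoeff_msupp p2E /=; case: ifP => //; rewrite eqxx.
  have gb : good b by apply/forallP => i; apply/implyP.
  have p1nz : p1 != 0.
    apply/eqP => h; move: bp; rewrite mcoeff_msupp; have := p1E b; rewrite gb h mcoeff0 => <-; by rewrite eqxx.
  have pm1nz : p1 ^+ m != 0 by rewrite expf_neq0.
  have [c cin] : exists c, c \in msupp (p1 ^+ m).
    case Es: (msupp (p1 ^+ m)) => [|c l]; last by exists c; rewrite mem_head.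
    by move/eqP: Es; rewrite msupp_eq0 (negbTE pm1nz).
  have cgood : good c by apply: (allP (msupp_expP good p1 m good0 goodD g1)).
  set S := \sum_(i < m) p ^+ (m.-1 - i) * p1 ^+ i.
  have pmE : p ^+ m = p1 ^+ m + p2 * S.
    by rewrite /p2 -subrXX addrC subrK.
  have c_notin : c \notin msupp (p2 * S).
    apply/negP => /(allP (msupp_mul_up (predC good) p2 S (fun m1 m2 => badD m1 m2) g2)) /=.
    by rewrite cgood.
  have cpm : c \in msupp (p ^+ m).
    by rewrite mcoeff_msupp pmE mcoeffD (memN_msupp_eq0 c_notin) addr0 -mcoeff_msupp.
  have cam : (a + c)%MM \in msupp (p ^+ m * 'X_[a]).
    by rewrite (perm_mem (msuppMX _ _)) map_f.
  have /hasP [g /mapP [[i j] ij_in ->] /= le] := MI1 _ _ Hm _ cam.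
  move: ij_in; rewrite edgesP => /andP [ltij Eij].
  have nij : i != j by rewrite neq_ltn ltij.
  have nji : j != i by rewrite eq_sym.
  move/mnm_lepP: (le) => le'.
  have hi : (w i j <= a i + c i)%N.
    by have := le' i; rewrite mulmnE !mnmDE !mnm1E ?eqxx ?(negbTE nij) ?(negbTE nji) mul1n.
  have hj : (w i j <= a j + c j)%N.
    by have := le' j; rewrite mulmnE !mnmDE !mnm1E ?eqxx ?(negbTE nij) ?(negbTE nji) mul1n.
  have hU k : k \in U -> b k = 0%N.
    move=> kU; apply/eqP; rewrite -[_ == _]negbK -lep1mP; apply/negP => hk.
    move/hasP: nh; apply; exists U_(k)%MM => //.
    by rewrite mem_cat; apply/orP; right; apply: map_f; rewrite mem_enum.
  have hE : b i != 0%N -> b j != 0%N -> i \in U \/ j \in U.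
    move=> bi bj; case: (boolP (i \in U)) => iU; [by left|].
    case: (boolP (j \in U)) => jU; [by right|].
    exfalso; move/hasP: nh; apply; exists (U_(i) + U_(j))%MM.
      rewrite mem_cat; apply/orP; left; apply/mapP; exists (i, j) => //.
      by rewrite mem_filter /= iU jU edgesP ltij Eij.
    apply/mnm_lepP => k; rewrite mnmDE !mnm1E.
    case: (eqVneq i k) => [eik|nik]; case: (eqVneq j k) => [ejk|njk] //=.
    - by move: nij; rewrite eik ejk eqxx.
    - by rewrite -eik lt0n.
    - by rewrite -ejk lt0n.
  have cgood' k : c k != 0%N -> b k != 0%N by move: cgood => /forallP /(_ k) /implyP.
  have notU k : b k != 0%N -> k \notin U by apply: contra => /hU ->.
  have ai : (w i j <= a i)%N.
    rewrite leqNgt; apply/negP => lt_ai.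
    have bi : b i != 0%N by apply: cgood'; apply/eqP => h; move: hi; rewrite h addn0 leqNgt lt_ai.
    have aj : (a j < w i j)%N.
      rewrite ltnNge; apply/negP => le_aj; move: (notU i bi); rewrite inE.
      by move/negP; apply; apply/existsP; exists j; rewrite Eij lt_ai le_aj.
    have bj : b j != 0%N by apply: cgood'; apply/eqP => h; move: hj; rewrite h addn0 leqNgt ?aj ?lt_aj.
    by case: (hE bi bj) => /hU /eqP; [move: bi| move: bj] => /negbTE ->.
  have aj : (w i j <= a j)%N.
    rewrite leqNgt; apply/negP => lt_aj.
    have bj : b j != 0%N by apply: cgood'; apply/eqP => h; move: hj; rewrite h addn0 leqNgt ?aj ?lt_aj.
    move: (notU j bj); rewrite inE; move/negP; apply; apply/existsP; exists i.
    by rewrite -E_sym Eij -w_sym // lt_aj ai.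
  apply: ha; rewrite wE; apply: MI2 => b'; rewrite msuppX mem_seq1 => /eqP ->.
  apply/hasP; exists ((U_(i) + U_(j)) *+ w i j)%MM.
    by apply/mapP; exists (i, j); rewrite ?edgesP ?ltij ?Eij.
  apply/mnm_lepP => k; rewrite mulmnE mnmDE !mnm1E.
  case: (eqVneq i k) => [eik|nik]; case: (eqVneq j k) => [ejk|njk] //=.
  - by move: nij; rewrite eik ejk eqxx.
  - by rewrite -eik mul1n.
  - by rewrite -ejk mul1n.
- move=> HJ; apply: (@gi_ind _ _ (rad_ideal (colon_ideal (gen_ideal (wedge_gens K E w)) 'X_[a])) _ _ _ _ p HJ).
  + exact: Q0.
  + exact: QD.
  + exact: QM.
  move=> x; rewrite mem_cat => /orP [].
  + case/mapP => -[i j]; rewrite mem_filter /= => /andP [/andP [iU jU]].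
    rewrite edgesP => /andP [_ Eij] ->; exists (w i j); rewrite /colon_ideal mulrC.
    by apply: giM; apply: wedge_mem.
  + case/mapP => k; rewrite mem_enum => kU ->.
    move: (kU); rewrite inE => /existsP [j /andP [Ekj /andP [lt le]]].
    exists (w k j); rewrite /colon_ideal.
    have hle : (U_(j) *+ w k j <= a)%MM.
      apply/mnm_lepP => l; rewrite mulmnE mnm1E.
      by case: (eqVneq j l) => [<-|_]; rewrite ?mul1n ?mul0n.
    rewrite -(submK hle) mpolyXD -mpolyXn mulrCA -exprMn.
    by apply: giM; apply: wedge_mem.
Qed.
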